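(* Let $m,v,x,y$ be nonzero real numbers, let $s>0$ and let $u,w\in\mathbb{R}$. Let $\mathfrak{n}$ be the five-dimensional real Lie algebra with basis $\{E_1,\dots,E_5\}$ whose only non-vanishing brackets (up to antisymmetry) are $$[E_1,E_2]=mE_3+sE_4+uE_5,\qquad [E_1,E_3]=vE_4+wE_5,\qquad [E_1,E_4]=xE_5,\qquad [E_2,E_3]=yE_5.$$ Equip the corresponding simply connected nilpotent Lie group with the left-invariant Riemannian metric for which $\{E_1,\dots,E_5\}$ is orthonormal. Then this metric is not an algebraic Ricci soliton.
   Context: Let $G$ be a Lie group with Lie algebra $\mathfrak{g}$ and let $g$ be a left-invariant Riemannian metric on $G$. Let $\mathrm{Ric}$ denote the $(1,1)$ Ricci tensor of $g$, viewed as a linear endomorphism of $\mathfrak{g}$. The metric $g$ is an algebraic Ricci soliton if there are a real number $c$ and a derivation $D$ of $\mathfrak{g}$ such that $\mathrm{Ric}=c\,\mathrm{Id}+D$. *)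

(* Defs.v *)
(* A 5-dimensional real Lie algebra is encoded by its structure constants
   C i j k = coefficient of E_k in [E_i, E_j], indices 0..4 (E_1..E_5 of the
   paper correspond to indices 0..4). The left-invariant metric is the one
   making (E_i) orthonormal, so all tensors are given by their components. *)
From Stdlib Require Import Reals Lra.
Open Scope R_scope.

Definition sum5 (f : nat -> R) : R := f 0%nat + f 1%nat + f 2%nat + f 3%nat + f 4%nat.

(* Levi-Civita connection (Koszul formula, orthonormal left-invariant frame):
   g(nabla_{E_i} E_j, E_k) = 1/2 ( g([E_i,E_j],E_k) - g([E_j,E_k],E_i) + g([E_k,E_i],E_j) ). *)
Definition Gam (C : nat -> nat -> nat -> R) (i j k : nat) : R :=
  / 2 * (C i j k - C j k i + C k i j).

(* Curvature R(X,Y)Z = nabla_X nabla_Y Z - nabla_Y nabla_X Z - nabla_[X,Y] Z;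
   Curv C a b c l = E_l-component of R(E_a,E_b)E_c. *)
Definition Curv (C : nat -> nat -> nat -> R) (a b c l : nat) : R :=
  sum5 (fun k => Gam C b c k * Gam C a k l - Gam C a c k * Gam C b k l
                 - C a b k * Gam C k c l).

(* Ricci tensor ric(Y,Z) = trace (X |-> R(X,Y)Z). Since the frame is orthonormal,
   the (1,1) Ricci endomorphism has matrix entries Ric C i j = ric(E_i,E_j)
   (E_i-component of Ric(E_j)). *)
Definition Ric (C : nat -> nat -> nat -> R) (i j : nat) : R :=
  sum5 (fun a => Curv C a j i a).

(* A linear endomorphism D of the algebra, D(E_j) = sum_i D i j E_i, is a derivation
   iff D[E_a,E_b] = [D E_a, E_b] + [E_a, D E_b] for all basis vectors. *)
Definition is_derivation (C : nat -> nat -> nat -> R) (D : nat -> nat -> R) : Prop :=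
  forall a b k : nat, (a < 5)%nat -> (b < 5)%nat -> (k < 5)%nat ->
    sum5 (fun l => C a b l * D k l) =
    sum5 (fun l => D l a * C l b k) + sum5 (fun l => D l b * C a l k).

Definition algebraic_ricci_soliton (C : nat -> nat -> nat -> R) : Prop :=
  exists (c : R) (D : nat -> nat -> R), is_derivation C D /\
    forall i j : nat, (i < 5)%nat -> (j < 5)%nat ->
      Ric C i j = c * (if Nat.eqb i j then 1 else 0) + D i j.

Local Open Scope nat_scope.
Definition nC (m s u v w x y : R) (i j k : nat) : R :=
  match i, j, k with
  | 0, 1, 2 => m%R | 0, 1, 3 => s | 0, 1, 4 => u
  | 1, 0, 2 => - m | 1, 0, 3 => - s | 1, 0, 4 => - u
  | 0, 2, 3 => v | 0, 2, 4 => w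
  | 2, 0, 3 => - v | 2, 0, 4 => - w
  | 0, 3, 4 => x | 3, 0, 4 => - x
  | 1, 2, 4 => y | 2, 1, 4 => - y
  | _, _, _ => 0%R
  end.

(* Main.v *)
Require Import Defs.
From Stdlib Require Import Reals.
From Stdlib Require Import Lra Lia.
Open Scope R_scope.

Theorem mainTheorem7 (m s u v w x y : R)
  (hm : m <> 0) (hv : v <> 0) (hx : x <> 0) (hy : y <> 0) (hs : 0 < s) :
  ~ algebraic_ricci_soliton (nC m s u v w x y).
Proof.
  intros [c [D [Hder Hric]]].
  assert (HD : forall i j, (i < 5)%nat -> (j < 5)%nat ->
     D i j = Ric (nC m s u v w x y) i j - c * (if Nat.eqb i j then 1 else 0)).
  { intros i j Hi Hj; rewrite (Hric i j Hi Hj); ring. }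
  pose proof (Hder 0%nat 1%nat 0%nat ltac:(lia) ltac:(lia) ltac:(lia)) as E1.
  pose proof (Hder 1%nat 2%nat 3%nat ltac:(lia) ltac:(lia) ltac:(lia)) as E2.
  pose proof (Hder 0%nat 1%nat 1%nat ltac:(lia) ltac:(lia) ltac:(lia)) as E3.
  unfold sum5 in E1, E2, E3.
  rewrite !HD in E1, E2, E3 by lia.
  unfold Ric, Curv, Gam, sum5, nC in E1, E2, E3; simpl in E1, E2, E3.
  assert (H1 : m * u * y = 0) by (ring_simplify in E1; lra).
  assert (Hu : u = 0).
  { destruct (Rmult_integral _ _ H1) as [H|H]; [|contradiction].
    destruct (Rmult_integral _ _ H) as [H'|H']; [contradiction|exact H']. }
  subst u.
  assert (H2 : v * w * y = 0) by (ring_simplify in E2; lra).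
  assert (Hw : w = 0).
  { destruct (Rmult_integral _ _ H2) as [H|H]; [|contradiction].
    destruct (Rmult_integral _ _ H) as [H'|H']; [contradiction|exact H']. }
  subst w.
  assert (H3 : m * s * v = 0) by (ring_simplify in E3; lra).
  destruct (Rmult_integral _ _ H3) as [H|H]; [|contradiction].
  destruct (Rmult_integral _ _ H) as [H'|H']; [contradiction|lra].
Qed.
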